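(* Let $A\in\mathbb{M}_m(\mathbb{M}_n)$ be positive semidefinite. Then \[ (\mathrm{tr} A)^{mn}+\big(\det(\mathrm{tr}_1 A)\big)^m\ge \det A+\big(\det(\mathrm{tr}_2 A)\big)^n, \] and \[ (\mathrm{tr} A)^{mn}+\big(\det(\mathrm{tr}_2 A)\big)^n\ge \det A+\big(\det(\mathrm{tr}_1 A)\big)^m. \]
   Context: $\mathbb{M}_m(\mathbb{M}_n)$ denotes the set of $mn\times mn$ complex matrices partitioned as $A=[A_{i,j}]_{i,j=1}^m$ with each block $A_{i,j}$ an $n\times n$ complex matrix. The partial traces are $\mathrm{tr}_1 A=\sum_{i=1}^m A_{i,i}\in\mathbb{M}_n$ and $\mathrm{tr}_2 A=[\mathrm{tr}\,A_{i,j}]_{i,j=1}^m\in\mathbb{M}_m$. *)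

(* Defs.v *)
(* Complex numbers: an arbitrary numClosedFieldType C
   (e.g. the complex numbers; algC is an instance). *)
From HB Require Import structures.
From mathcomp Require Import all_boot all_order all_algebra.
Set Implicit Arguments. Unset Strict Implicit. Unset Printing Implicit Defensive.
Import Order.TTheory GRing.Theory Num.Theory.
Local Open Scope ring_scope.

Definition adjmx (C : numClosedFieldType) (p q : nat) (A : 'M[C]_(p, q)) : 'M[C]_(q, p) :=
  \matrix_(i, j) (A j i)^*.

Definition psdmx (C : numClosedFieldType) (p : nat) (A : 'M[C]_p) : Prop :=
  adjmx A = A /\ forall x : 'cV[C]_p, 0 <= (adjmx x *m A *m x) ord0 ord0.

(* An element of M_m(M_n) is an (m*n)x(m*n) matrix; block (i,j) has entry
   (k,l) equal to A (mxvec_index i k) (mxvec_index j l), i.e. row i*n+k, column j*n+l. *)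
Definition blk (C : numClosedFieldType) (m n : nat) (A : 'M[C]_(m * n))
  (i j : 'I_m) : 'M[C]_n :=
  \matrix_(k, l) A (mxvec_index i k) (mxvec_index j l).

Definition ptrace1 (C : numClosedFieldType) (m n : nat) (A : 'M[C]_(m * n)) : 'M[C]_n :=
  \sum_(i < m) blk A i i.

Definition ptrace2 (C : numClosedFieldType) (m n : nat) (A : 'M[C]_(m * n)) : 'M[C]_m :=
  \matrix_(i, j) \tr (blk A i j).

(* Main.v *)
Require Import Defs.
From HB Require Import structures.
From mathcomp Require Import all_boot all_order all_algebra.
From mathcomp Require Import ring.
From mathcomp Require Import fingroup perm.
Import Order.TTheory GRing.Theory Num.Theory.
Local Open Scope ring_scope.
Set Implicit Arguments. Unset Strict Implicit.

Lemma adjmxE {C : numClosedFieldType} p q (A : 'M[C]_(p,q)) :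
  adjmx A = (map_mx Num.conj A)^T.
Proof. by apply/matrixP=> i j; rewrite !mxE. Qed.

Lemma adjmxK {C : numClosedFieldType} p q (A : 'M[C]_(p,q)) : adjmx (adjmx A) = A.
Proof. by apply/matrixP=> i j; rewrite !mxE conjCK. Qed.

Lemma adjmxM {C : numClosedFieldType} p q r (A : 'M[C]_(p,q)) (B : 'M[C]_(q,r)) :
  adjmx (A *m B) = adjmx B *m adjmx A.
Proof. by rewrite !adjmxE map_mxM trmx_mul. Qed.

Lemma adjmxD {C : numClosedFieldType} p q (A B : 'M[C]_(p,q)) :
  adjmx (A + B) = adjmx A + adjmx B.
Proof. by apply/matrixP=> i j; rewrite !mxE rmorphD. Qed.

Lemma adjmxZ {C : numClosedFieldType} p q a (A : 'M[C]_(p,q)) :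
  adjmx (a *: A) = a^* *: adjmx A.
Proof. by apply/matrixP=> i j; rewrite !mxE rmorphM. Qed.

Lemma adjmx_delta {C : numClosedFieldType} p q (i : 'I_p) (j : 'I_q) :
  adjmx (delta_mx i j : 'M[C]_(p,q)) = delta_mx j i.
Proof. by apply/matrixP=> k l; rewrite !mxE; case: eqP; case: eqP => //= *; rewrite ?conjC1 ?conjC0. Qed.

Lemma qform_delta {C : numClosedFieldType} p (P : 'M[C]_p) (i j : 'I_p) :
  (adjmx (delta_mx i ord0 : 'cV[C]_p) *m P *m (delta_mx j ord0 : 'cV[C]_p)) ord0 ord0 = P i j.
Proof. by rewrite adjmx_delta -rowE -colE !mxE. Qed.

Lemma psd_diag {C : numClosedFieldType} p (P : 'M[C]_p) i : psdmx P -> 0 <= P i i.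
Proof. by case=> _ /(_ (delta_mx i 0)); rewrite qform_delta. Qed.

Lemma psd_herm {C : numClosedFieldType} p (P : 'M[C]_p) i j : psdmx P -> (P i j)^* = P j i.
Proof. by case=> /matrixP /(_ j i); rewrite mxE. Qed.

Lemma qform_deltaM {C : numClosedFieldType} p (P : 'M[C]_p) (i j : 'I_p) :
  adjmx (delta_mx i ord0 : 'cV[C]_p) *m P *m (delta_mx j ord0 : 'cV[C]_p) = (P i j)%:M.
Proof.
by apply/matrixP=> a b; rewrite !ord1 qform_delta mxE eqxx mulr1n.
Qed.


Lemma psd_off0 {C : numClosedFieldType} p (P : 'M[C]_p) (i j : 'I_p) :
  psdmx P -> P i i = 0 -> P i j = 0.
Proof.
move=> psdP Pii0; have [_ hP] := psdP.
have hji := psd_herm i j psdP.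
apply/eqP/negPn/negP => bn0.
set b := P i j in bn0 hji.
have nb : 0 < b * b^* by rewrite -normCK exprn_gt0 // normr_gt0.
set k := (P j j + 1) / (b * b^*).
have kr : k^* = k.
  apply: geC0_conj; apply: divr_ge0; [apply: addr_ge0 => //; exact: psd_diag | exact: ltW].
pose x : 'cV[C]_p := (- k * b) *: delta_mx i ord0 + delta_mx j ord0.
have := hP x.
rewrite /x adjmxD adjmxZ !mulmxDl !mulmxDr -!scalemxAl -!scalemxAr.
rewrite !qform_deltaM !mxE !eqxx !mulr1n.
rewrite Pii0 -/b -hji.
have -> : (- k * b)^* = - k * b^* by rewrite rmorphM rmorphN /= kr.
have -> : - k * b^* * (- k * b * 0) + - k * b^* * b + (- k * b * b^* + P j j)
   = P j j - 2%:R * (k * (b * b^*)) by rewrite !mulr0 add0r; ring.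
rewrite /k divfK ?gt_eqF // subr_ge0 => h.
have h2 : P j j + 1 <= 2%:R * (P j j + 1) by rewrite ler_peMl ?addr_ge0 ?psd_diag// ler1n.
have := le_trans h2 h; by rewrite gerDl ler10.
Qed.


Lemma adjmx_col {C : numClosedFieldType} p1 p2 q (A : 'M[C]_(p1,q)) (B : 'M[C]_(p2,q)) :
  adjmx (col_mx A B) = row_mx (adjmx A) (adjmx B).
Proof. by rewrite !adjmxE map_col_mx tr_col_mx. Qed.

Lemma hadamard_step {C : numClosedFieldType} n (P : 'M[C]_(1 + n)) :
  (forall Q : 'M[C]_n, psdmx Q -> 0 <= \det Q /\ \det Q <= \prod_i Q i i) ->
  psdmx P -> 0 <= \det P /\ \det P <= \prod_i P i i.
Proof.
move=> IH psdP; have [hA hP] := psdP.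
set ul := ulsubmx P; set ur := ursubmx P; set dl := dlsubmx P; set dr := drsubmx P.
have PE : P = block_mx ul ur dl dr by rewrite submxK.
set a := P (lshift n 0) (lshift n 0).
have a0 : 0 <= a := psd_diag _ psdP.
have ulE : ul = a%:M by apply/matrixP => i j; rewrite !ord1 !mxE eqxx mulr1n.
have urE : adjmx ur = dl by apply/matrixP => i j; rewrite !mxE psd_herm.
have dlE : adjmx dl = ur by rewrite -urE adjmxK.
have drE : adjmx dr = dr by apply/matrixP => i j; rewrite !mxE psd_herm.
rewrite big_split_ord big_ord1 /= -/a.
have drd i : dr i i = P (rshift 1 i) (rshift 1 i) by rewrite /dr !mxE.
have -> : \prod_(i < n) P (rshift 1 i) (rshift 1 i) = \prod_i dr i i by apply: eq_bigr => i _; rewrite drd.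
have [az|anz] := eqVneq a 0.
  have ur0 : ur = 0.
    by apply/matrixP => i j; rewrite !ord1 !mxE psd_off0.
  rewrite PE ur0 det_lblock ulE det_scalar expr1 az !mul0r; split => //.
have ap : 0 < a by rewrite lt_def anz.
have ai : a^-1^* = a^-1 by apply: geC0_conj; rewrite invr_ge0.
set S := dr - a^-1 *: (dl *m ur).
have detE : \det P = a * \det S.
  pose L : 'M[C]_(1 + n) := block_mx 1%:M 0 (- a^-1 *: dl) 1%:M.
  have LP : L *m P = block_mx ul ur 0 S.
    rewrite PE mulmx_block !mul0mx !mul1mx !addr0 ulE mul_mx_scalar -scalemxAl.
    by rewrite scalerA mulrN mulfV // scaleN1r addNr /S addrC scaleNr.
  have := det_mulmx L P; rewrite LP det_ublock det_lblock !det1 !mul1r => <-.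
  by rewrite ulE det_scalar expr1.
have psdS : psdmx S.
  split.
    by rewrite /S adjmxD -scaleN1r adjmxZ adjmxZ adjmxM urE dlE drE rmorphN1 ai scaleN1r.
  move=> x; pose y := col_mx (- a^-1 *: (ur *m x)) x.
  have := hP y; congr (0 <= _ _ _).
  rewrite /y PE adjmx_col mul_row_block mul_row_col adjmxZ adjmxM urE rmorphN /= ai ulE mul_mx_scalar scalerA mulrN mulfV // scaleN1r addNr mul0mx add0r.
  rewrite /S mulmxDr mulmxDl addrC mulmxN mulmxBl -scalemxAr -!scalemxAl !mulmxA scaleNr. done.
have Sd i : 0 <= S i i <= dr i i.
  rewrite psd_diag //= /S !mxE big_ord1 gerBl.
  by rewrite -dlE !mxE mulr_ge0 ?invr_ge0 // mul_conjC_ge0.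
have [d0 d1] := IH S psdS.
rewrite detE; split; first exact: mulr_ge0.
apply: ler_wpM2l => //; apply: le_trans d1 _; exact: ler_prod.
Qed.

Lemma hadamard {C : numClosedFieldType} n (P : 'M[C]_n) :
  psdmx P -> 0 <= \det P /\ \det P <= \prod_i P i i.
Proof.
elim: n P => [|n IH] P hP; first by rewrite det_mx00 big_ord0.
exact: (hadamard_step (P := P) IH hP).
Qed.


Lemma sum_mxvec {R : nmodType} m n (F : 'I_(m * n) -> R) :
  \sum_p F p = \sum_i \sum_k F (mxvec_index i k).
Proof. rewrite (reindex _ (curry_mxvec_bij _ _)) /= pair_bigA; by apply: eq_bigr => -[i k] _. Qed.

Lemma qformE {C : numClosedFieldType} p (P : 'M[C]_p) (x : 'cV[C]_p) :
  (adjmx x *m P *m x) ord0 ord0 = \sum_i \sum_j (x i ord0)^* * P i j * x j ord0.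
Proof.
rewrite mxE exchange_big; apply: eq_bigr => j _; rewrite mxE mulr_suml.
by apply: eq_bigr => i _; rewrite mxE.
Qed.

Lemma qform_mxvec {C : numClosedFieldType} m n (A : 'M[C]_(m * n)) (M : 'M[C]_(m, n)) :
  (adjmx (mxvec M)^T *m A *m (mxvec M)^T) ord0 ord0 =
  \sum_i \sum_k \sum_j \sum_l (M i k)^* * A (mxvec_index i k) (mxvec_index j l) * M j l.
Proof.
rewrite qformE sum_mxvec; apply: eq_bigr => i _; apply: eq_bigr => k _.
rewrite sum_mxvec; apply: eq_bigr => j _; apply: eq_bigr => l _.
by rewrite !mxE !mxvecE.
Qed.

Lemma sum_delta {R : pzSemiRingType} q (i : 'I_q) (F : 'I_q -> R) :
  \sum_j (j == i)%:R * F j = F i.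
Proof.
rewrite (bigD1 i) //= eqxx mul1r big1 ?addr0 // => j /negbTE ->; exact: mul0r.
Qed.

Lemma ptrace1E {C : numClosedFieldType} m n (A : 'M[C]_(m * n)) k l :
  ptrace1 A k l = \sum_i A (mxvec_index i k) (mxvec_index i l).
Proof. by rewrite /ptrace1 summxE; apply: eq_bigr => i _; rewrite mxE. Qed.

Lemma ptrace2E {C : numClosedFieldType} m n (A : 'M[C]_(m * n)) i j :
  ptrace2 A i j = \sum_k A (mxvec_index i k) (mxvec_index j k).
Proof. by rewrite mxE /mxtrace; apply: eq_bigr => k _; rewrite mxE. Qed.

Lemma trace_mxvec {C : numClosedFieldType} m n (A : 'M[C]_(m * n)) :
  \tr A = \sum_i \sum_k A (mxvec_index i k) (mxvec_index i k).
Proof. exact: sum_mxvec. Qed.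

Lemma tr_ptrace1 {C : numClosedFieldType} m n (A : 'M[C]_(m * n)) :
  \tr (ptrace1 A) = \tr A.
Proof.
rewrite trace_mxvec exchange_big; apply: eq_bigr => k _; exact: ptrace1E.
Qed.

Lemma tr_ptrace2 {C : numClosedFieldType} m n (A : 'M[C]_(m * n)) :
  \tr (ptrace2 A) = \tr A.
Proof. rewrite trace_mxvec; apply: eq_bigr => i _; exact: ptrace2E. Qed.

Lemma psd_ptrace1 {C : numClosedFieldType} m n (A : 'M[C]_(m * n)) :
  psdmx A -> psdmx (ptrace1 A).
Proof.
move=> hA; have [_ hq] := hA; split.
  apply/matrixP => k l; rewrite mxE !ptrace1E rmorph_sum /=.
  by apply: eq_bigr => i _; rewrite psd_herm.
move=> x; rewrite qformE.
have -> : \sum_k \sum_l (x k ord0)^* * ptrace1 A k l * x l ord0 =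
   \sum_i (adjmx (mxvec (\matrix_(i', k) ((i' == i)%:R * x k ord0)))^T *m A *m
            (mxvec (\matrix_(i', k) ((i' == i)%:R * x k ord0)))^T) ord0 ord0.
  transitivity (\sum_i \sum_k \sum_l (x k ord0)^* * A (mxvec_index i k) (mxvec_index i l) * x l ord0).
    symmetry; rewrite exchange_big; apply: eq_bigr => k _; rewrite exchange_big; apply: eq_bigr => l _ /=.
    by rewrite ptrace1E mulr_sumr mulr_suml; apply: eq_bigr.
  apply: eq_bigr => i _; rewrite qform_mxvec.
  transitivity (\sum_i' (i' == i)%:R * \sum_k \sum_j' \sum_l (x k ord0)^* *
      A (mxvec_index i' k) (mxvec_index j' l) * ((j' == i)%:R * x l ord0)).
    rewrite sum_delta; apply: eq_bigr => k _.
    transitivity (\sum_j' (j' == i)%:R * \sum_l (x k ord0)^* * A (mxvec_index i k) (mxvec_index j' l) * x l ord0).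
      by rewrite sum_delta.
    apply: eq_bigr => j' _; rewrite mulr_sumr; apply: eq_bigr => l _; ring.
  apply: eq_bigr => i' _; rewrite mulr_sumr; apply: eq_bigr => k _; rewrite mulr_sumr.
  apply: eq_bigr => j' _; rewrite mulr_sumr; apply: eq_bigr => l _.
  rewrite !mxE rmorphM /= rmorph_nat; ring.
by apply: sumr_ge0 => i _; apply: hq.
Qed.

Lemma psd_ptrace2 {C : numClosedFieldType} m n (A : 'M[C]_(m * n)) :
  psdmx A -> psdmx (ptrace2 A).
Proof.
move=> hA; have [_ hq] := hA; split.
  apply/matrixP => i j; rewrite mxE !ptrace2E rmorph_sum /=.
  by apply: eq_bigr => k _; rewrite psd_herm.
move=> x; rewrite qformE.
have -> : \sum_i \sum_j (x i ord0)^* * ptrace2 A i j * x j ord0 =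
   \sum_k (adjmx (mxvec (\matrix_(i, k') ((k' == k)%:R * x i ord0)))^T *m A *m
            (mxvec (\matrix_(i, k') ((k' == k)%:R * x i ord0)))^T) ord0 ord0.
  transitivity (\sum_k \sum_i \sum_j (x i ord0)^* * A (mxvec_index i k) (mxvec_index j k) * x j ord0).
    symmetry; rewrite exchange_big; apply: eq_bigr => i _; rewrite exchange_big; apply: eq_bigr => j _ /=.
    by rewrite ptrace2E mulr_sumr mulr_suml; apply: eq_bigr.
  apply: eq_bigr => k _; rewrite qform_mxvec; apply: eq_bigr => i _.
  transitivity (\sum_k' (k' == k)%:R * \sum_j \sum_l (x i ord0)^* *
      A (mxvec_index i k') (mxvec_index j l) * ((l == k)%:R * x j ord0)).
    rewrite sum_delta; apply: eq_bigr => j _.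
    transitivity (\sum_l (l == k)%:R * ((x i ord0)^* * A (mxvec_index i k) (mxvec_index j l) * x j ord0)).
      by rewrite sum_delta.
    apply: eq_bigr => l _; ring.
  apply: eq_bigr => k' _; rewrite mulr_sumr; apply: eq_bigr => j _; rewrite mulr_sumr.
  apply: eq_bigr => l _.
  rewrite !mxE rmorphM /= rmorph_nat; ring.
by apply: sumr_ge0 => i _; apply: hq.
Qed.


Lemma det_reindex {R : comPzRingType} p q (e : q = p) (A : 'M[R]_p) (f : 'I_q -> 'I_p) :
  injective f -> \det (\matrix_(k, l) A (f k) (f l)) = \det A.
Proof.
case: p / e in A f * => finj.
have -> : \matrix_(k, l) A (f k) (f l) = row_perm (perm finj) (col_perm (perm finj) A).
  by apply/matrixP => i j; rewrite !mxE !permE.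
by rewrite row_permE col_permE !det_mulmx !det_perm odd_permV mulrCA -expr2 sqrr_sign mulr1.
Qed.

Lemma mxvec_index_inj m n (i i' : 'I_m) (k k' : 'I_n) :
  mxvec_index i k = mxvec_index i' k' -> i = i' /\ k = k'.
Proof. by rewrite /mxvec_index => /cast_ord_inj /enum_rank_inj [-> ->]. Qed.

Lemma ptrace1_m1 {C : numClosedFieldType} n (A : 'M[C]_(1 * n)) :
  \det (ptrace1 A) = \det A.
Proof.
have -> : ptrace1 A = \matrix_(k, l) A (mxvec_index ord0 k) (mxvec_index ord0 l).
  by apply/matrixP => k l; rewrite ptrace1E big_ord1 mxE.
apply: (det_reindex (esym (mul1n n))) => k l /mxvec_index_inj []; done.
Qed.

Lemma ptrace2_n1 {C : numClosedFieldType} m (A : 'M[C]_(m * 1)) :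
  \det (ptrace2 A) = \det A.
Proof.
have -> : ptrace2 A = \matrix_(i, j) A (mxvec_index i ord0) (mxvec_index j ord0).
  by apply/matrixP => i j; rewrite ptrace2E big_ord1 mxE.
apply: (det_reindex (esym (muln1 m))) => k l /mxvec_index_inj []; done.
Qed.


Lemma agm_diag {C : numClosedFieldType} k (P : 'M[C]_k) :
  psdmx P -> \prod_i P i i <= (\tr P / k%:R) ^+ k.
Proof.
move=> hP.
have := leif_AGM (A := [pred i : 'I_k | true]) (E := fun i => P i i) (fun i _ => psd_diag i hP).
have -> : #|[pred i : 'I_k | true]| = k by rewrite -[in RHS](card_ord k); apply: eq_card.
by case.
Qed.

Lemma inv_pow_le {C : numFieldType} k N : (2 <= k)%N -> (0 < N)%N ->
  (k%:R^-1 : C) ^+ N <= 2^-1.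
Proof.
move=> k2 N0.
have kp : (0 : C) < k%:R by rewrite ltr0n; apply: leq_trans k2.
have h1 : (k%:R^-1 : C) <= 2^-1.
  rewrite lef_pV2 ?posrE ?ltr0n //.
  have h : (2%:R : C) <= k%:R by rewrite ler_nat.
    exact: h.
  exact: leq_trans k2.
apply: le_trans (h1); apply: ler_iXnr => //; first by rewrite invr_ge0 ltW.
by rewrite invf_le1 // ler1n; apply: leq_trans k2.
Qed.

Lemma final_arith {C : numFieldType} (t dA d2 d1 : C) m n N : N = (m * n)%N ->
  (2 <= m)%N -> (0 < n)%N -> 0 <= t ->
  0 <= dA -> dA <= (t / N%:R) ^+ N -> 0 <= d2 -> d2 <= (t / m%:R) ^+ m ->
  0 <= d1 -> dA + d2 ^+ n <= t ^+ N + d1 ^+ m.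
Proof.
move=> -> m2 n0 t0 a0 a1 b0 b1 c0.
have N2 : (2 <= m * n)%N by rewrite (leq_trans m2) // leq_pmulr.
have e2 : d2 ^+ n <= t ^+ (m * n) * (m%:R^-1) ^+ (m * n).
  rewrite -exprMn exprM; apply: lerXn2r; rewrite ?nnegrE ?exprn_ge0 ?mulr_ge0 ?invr_ge0 ?ler0n //.
have e1 : dA <= t ^+ (m * n) * ((m * n)%:R^-1) ^+ (m * n) by rewrite -exprMn.
apply: le_trans (lerD e1 e2) _.
rewrite -mulrDr -[X in X <= _]addr0; apply: lerD; last exact: exprn_ge0.
rewrite -[X in _ <= X]mulr1; apply: ler_wpM2l; first exact: exprn_ge0.
have N0 : (0 < m * n)%N by apply: leq_trans N2.
have h1 := @inv_pow_le C (m * n) (m * n) N2 N0.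
have h2 := @inv_pow_le C m (m * n) m2 N0.
apply: le_trans (lerD h1 h2) _.
by rewrite [X in _ <= X](splitr 1) mul1r.
Qed.


Lemma det_sz0 {R : comPzRingType} k (B : 'M[R]_k) : k = 0%N -> \det B = 1.
Proof. by case: k B => // B _; exact: det_mx00. Qed.

Lemma tr_sz0 {R : comPzRingType} k (B : 'M[R]_k) : k = 0%N -> \tr B = 0.
Proof. by case: k B => // B _; rewrite /mxtrace big_ord0. Qed.

Unset Implicit Arguments. Set Strict Implicit.

Theorem proposition4p6 (C : numClosedFieldType) (m n : nat) (A : 'M[C]_(m * n)) :
  psdmx A ->
  \det A + (\det (ptrace2 A)) ^+ n <= (\tr A) ^+ (m * n) + (\det (ptrace1 A)) ^+ m /\
  \det A + (\det (ptrace1 A)) ^+ m <= (\tr A) ^+ (m * n) + (\det (ptrace2 A)) ^+ n.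
Proof.
move=> hA.
have [n0|npos] := posnP n.
  subst n; rewrite (det_sz0 A (muln0 m)) (tr_sz0 A (muln0 m)) det_mx00.
  by rewrite muln0 !expr0 expr1n.
have [m0|mpos] := posnP m.
  subst m; rewrite (det_sz0 A (mul0n n)) (tr_sz0 A (mul0n n)) det_mx00.
  by rewrite mul0n !expr0 expr1n.
have t0 : 0 <= \tr A by apply: sumr_ge0 => i _; exact: psd_diag.
have [a0 a1] := hadamard hA.
have [b0 b1] := hadamard (psd_ptrace1 hA).
have [c0 c1] := hadamard (psd_ptrace2 hA).
have aA := agm_diag hA.
have aB := agm_diag (psd_ptrace1 hA); rewrite tr_ptrace1 in aB.
have aC := agm_diag (psd_ptrace2 hA); rewrite tr_ptrace2 in aC.
have dA := le_trans a1 aA; have d1 := le_trans b1 aB; have d2 := le_trans c1 aC.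
split.
  have [m1|m2] := eqVneq m 1%N.
    subst m; rewrite expr1 ptrace1_m1 addrC exprM expr1; apply: lerD => //.
    apply: lerXn2r; rewrite ?nnegrE //; by move: d2; rewrite divr1 expr1.
  apply: (final_arith (erefl _)) => //; first by rewrite ltn_neqAle eq_sym m2.
have [n1|n2] := eqVneq n 1%N.
  subst n; rewrite expr1 ptrace2_n1 addrC exprM expr1; apply: lerD => //.
  apply: lerXn2r; rewrite ?nnegrE //; by move: d1; rewrite divr1 expr1.
apply: (final_arith (mulnC m n)) => //; first by rewrite ltn_neqAle eq_sym n2.
Qed.
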